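(* In the sequential contribution game described in the context, let $U$ be an open set of parameter triples $(\gamma,\rho,B)$ with $\gamma>0$, $\rho>0$, $0<B<c_{\max}$, such that for every $(\gamma,\rho,B)\in U$ (with $P$ fixed) the inequalities \[ \rho > n\max_i\ell_i'(c_{\max}),\quad \gamma > \max_{k=2,\dots,n}\frac{\ell_k'(c_{\max})B-\rho/n}{c_{\min}/B},\quad P > \Bigl(\max_i\ell_i'(c_{\max})+\gamma\tfrac{c_{\max}}{B}+\tfrac{\rho}{n}\Bigr)(c_{\max}-c_{\min}) \] hold, so that the game has a unique SPNE outcome $c^*(\gamma,\rho,B)$. Define total equilibrium welfare $W(\gamma,\rho,B)=\sum_{i=1}^n R_i\bigl(c^*(\gamma,\rho,B);\gamma,\rho,B\bigr)$. Then on $U$, $W$ is differentiable and \[ \frac{\partial W}{\partial\gamma}>0,\qquad \frac{\partial W}{\partial\rho}>0,\qquad \frac{\partial W}{\partial B}<0, \] i.e. total welfare is increasing in the cooperation coefficient $\gamma$ and in the sharing rate $\rho$, and decreasing in the threshold $B$.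
   Context: Sequential contribution game (MAC-SPGG). There are $n\ge 2$ agents acting once each in the fixed order $1,2,\dots,n$. Agent $i$ observes the previous contributions $c_1,\dots,c_{i-1}$ (perfect information) and chooses a contribution (score) $c_i\in[c_{\min},c_{\max}]$, where $0<c_{\min}\le c_{\max}<\infty$. A task threshold $B>0$ is given. Convention: $c_0:=0$. Write $S_n=\sum_{j=1}^n c_j$. Each agent $i$ has a cost function $\ell_i:[c_{\min},c_{\max}]\to\mathbb{R}$ that is strictly convex, twice continuously differentiable, with $\ell_i'>0$. Parameters $\rho>0$ (task reward multiplier), $\gamma>0$ (cooperation coefficient), $P>0$ (failure penalty). The payoff of agent $i$ for the profile $c=(c_1,\dots,c_n)$, depending on parameters $(\gamma,\rho,B)$, is \[ R_i(c;\gamma,\rho,B)= -\ell_i(c_i)+\gamma\,\frac{c_{i-1}}{B}\,c_i+\frac{\rho}{n}\,S_n-P\cdot\mathbf{1}(c_n<B). \] SPNE denotes subgame perfect Nash equilibrium of this finite perfect-information game. *)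

(* Defs.v *)
From Stdlib Require Import Reals Lra List.
Open Scope R_scope.

Definition has_deriv_on (a b : R) (f df : R -> R) : Prop :=
  forall x, a <= x <= b -> forall eps, 0 < eps ->
    exists delta, 0 < delta /\
      forall h, h <> 0 -> Rabs h < delta -> a <= x + h <= b ->
        Rabs ((f (x + h) - f x) / h - df x) < eps.

Definition cont_on (a b : R) (f : R -> R) : Prop :=
  forall x, a <= x <= b -> forall eps, 0 < eps ->
    exists delta, 0 < delta /\
      forall y, a <= y <= b -> Rabs (y - x) < delta -> Rabs (f y - f x) < eps.

Definition strictly_convex_on (a b : R) (f : R -> R) : Prop :=
  forall x y t, a <= x <= b -> a <= y <= b -> x <> y -> 0 < t < 1 ->
    f (t * x + (1 - t) * y) < t * f x + (1 - t) * f y.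

Definition admissible_cost (a b : R) (l dl : R -> R) : Prop :=
  strictly_convex_on a b l /\
  (exists d2, has_deriv_on a b l dl /\ has_deriv_on a b dl d2 /\ cont_on a b d2) /\
  (forall x, a <= x <= b -> 0 < dl x).

(** Profiles/histories are lists [c_1; ...; c_k]; [get c j] = c_j, with c_0 = 0. *)
Definition get (c : list R) (j : nat) : R :=
  match j with O => 0 | S k => nth k c 0 end.

Definition total (n : nat) (c : list R) : R :=
  fold_right Rplus 0 (map (get c) (seq 1 n)).

Definition payoff (n : nat) (l : nat -> R -> R) (P gamma rho B : R)
    (c : list R) (i : nat) : R :=
  - l i (get c i) + gamma * (get c (i - 1) / B) * get c i
  + rho / INR n * total n c
  - P * (if Rlt_dec (get c n) B then 1 else 0).

(** A strategy profile: agent i maps the observed history [c_1;...;c_{i-1}] to c_i. *)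
Definition strategy := nat -> list R -> R.

Fixpoint play (s : strategy) (k : nat) (h : list R) : list R :=
  match k with
  | O => h
  | S k' => play s k' (h ++ (s (S (length h)) h :: nil))
  end.

Definition outcome (n : nat) (s : strategy) (h : list R) : list R :=
  play s (n - length h) h.

Definition feasible_strategy (cmin cmax : R) (s : strategy) : Prop :=
  forall i h, cmin <= s i h <= cmax.

Definition feasible_history (cmin cmax : R) (h : list R) : Prop :=
  List.Forall (fun x => cmin <= x <= cmax) h.

Definition deviate (s : strategy) (i : nat) (t : list R -> R) : strategy :=
  fun j h => if Nat.eqb j i then t h else s j h.

Definition is_SPNE (n : nat) (cmin cmax : R) (l : nat -> R -> R)
    (P gamma rho B : R) (s : strategy) : Prop :=
  feasible_strategy cmin cmax s /\
  forall h, feasible_history cmin cmax h -> (length h < n)%nat ->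
  forall i, (length h < i <= n)%nat ->
  forall t : list R -> R, (forall h', cmin <= t h' <= cmax) ->
    payoff n l P gamma rho B (outcome n (deviate s i t) h) i
      <= payoff n l P gamma rho B (outcome n s h) i.

Definition is_SPNE_outcome (n : nat) (cmin cmax : R) (l : nat -> R -> R)
    (P gamma rho B : R) (c : list R) : Prop :=
  exists s, is_SPNE n cmin cmax l P gamma rho B s /\ outcome n s nil = c.

Definition welfare (n : nat) (l : nat -> R -> R) (P gamma rho B : R)
    (c : list R) : R :=
  fold_right Rplus 0 (map (payoff n l P gamma rho B c) (seq 1 n)).

Definition max_range (a b : nat) (f : nat -> R) : R :=
  fold_right Rmax (f a) (map f (seq a (S (b - a)))).

(* Main.v *)
Require Import Defs.
From Stdlib Require Import Reals List Lra Lia.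
From Coquelicot Require Import Coquelicot.
Open Scope R_scope.

Lemma tangent a b l dl x k : admissible_cost a b l dl -> a <= x < b -> dl b < k ->
  l b - l x < k * (b - x).
Proof.
  intros [Hconv [[d2 [Hd _]] _]] Hx Hk.
  assert (Hab : a <= b <= b) by lra.
  destruct (Hd b Hab (k - dl b) ltac:(lra)) as [delta [Hdel Hd']].
  set (d := b - x).
  assert (Hdp : 0 < d) by (unfold d; lra).
  set (t := Rmin (1/2) (delta / (2 * d))).
  assert (Ht1 : t <= 1/2) by apply Rmin_l.
  assert (Ht2 : t <= delta / (2*d)) by apply Rmin_r.
  assert (Htp : 0 < t).
  { unfold t; apply Rmin_pos; [lra|]. apply Rdiv_lt_0_compat; lra. }
  assert (Htd : t * d < delta).
  { apply Rle_lt_trans with (delta / (2*d) * d).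
    apply Rmult_le_compat_r; lra.
    replace (delta / (2*d) * d) with (delta/2) by (field; lra). lra. }
  set (h := - (t * d)).
  assert (Hh0 : h <> 0).
  { unfold h. assert (0 < t*d) by (apply Rmult_lt_0_compat; lra). lra. }
  assert (Habs : Rabs h < delta).
  { unfold h. rewrite Rabs_Ropp, Rabs_pos_eq; [lra|].
    apply Rmult_le_pos; lra. }
  assert (Hrange : a <= b + h <= b).
  { unfold h. assert (t*d <= d/2). { apply Rle_trans with (1/2*d). apply Rmult_le_compat_r; lra. lra. }
    assert (0 < t*d) by (apply Rmult_lt_0_compat; lra). unfold d in *. lra. }
  specialize (Hd' h Hh0 Habs Hrange).
  set (Q := (l (b + h) - l b) / h) in *.
  assert (HQ : Q < k).
  { apply Rabs_def2 in Hd'. lra. }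
  assert (HQh : Q * h = l (b + h) - l b) by (unfold Q; field; auto).
  assert (Hc : l (t * x + (1 - t) * b) < t * l x + (1 - t) * l b).
  { apply Hconv; try lra. }
  replace (t * x + (1 - t) * b) with (b + h) in Hc by (unfold h, d; ring).
  assert (H1 : t * (d * Q) > t * (l b - l x)).
  { replace (t * (d*Q)) with (- (Q*h)) by (unfold h; ring). lra. }
  apply Rmult_gt_reg_l in H1; [|lra].
  assert (d * Q < d * k) by (apply Rmult_lt_compat_l; lra).
  unfold d in *. lra.
Qed.

Definition sumf (f : nat -> R) (l : list nat) := fold_right Rplus 0 (map f l).

Lemma sumf_ext f g l : (forall j, In j l -> f j = g j) -> sumf f l = sumf g l.
Proof. induction l; simpl; intros H; auto. unfold sumf in *; simpl. rewrite H by auto. rewrite IHl; auto. Qed.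

Lemma sumf_add f k l : sumf (fun j => f j + k) l = sumf f l + INR (length l) * k.
Proof. induction l; unfold sumf in *; [simpl; ring|].
  replace (INR (length (a :: l))) with (INR (length l) + 1) by (rewrite <- S_INR; reflexivity).
  simpl. rewrite IHl. ring. Qed.

Lemma sumf_diff f g i l : NoDup l -> In i l -> (forall j, j <> i -> f j = g j) ->
  sumf f l - sumf g l = f i - g i.
Proof.
  induction l as [|a l IH]; intros Hnd Hi Hfg; [destruct Hi|].
  inversion Hnd; subst. unfold sumf in *; simpl.
  destruct Hi as [->|Hi].
  - assert (fold_right Rplus 0 (map f l) = fold_right Rplus 0 (map g l)).
    { apply (sumf_ext f g l). intros j Hj. apply Hfg. intros ->; contradiction. }
    unfold sumf in H; rewrite H. ring.
  - rewrite (Hfg a) by (intros ->; contradiction).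
    specialize (IH H2 Hi Hfg). lra.
Qed.

Lemma nth_app_other (p rest : list R) y z k : k <> length p ->
  nth k (p ++ y :: rest) 0 = nth k (p ++ z :: rest) 0.
Proof.
  revert k; induction p; intros k Hk; destruct k; simpl in *; auto; try lia.
Qed.

Lemma nth_app_at (p rest : list R) y : nth (length p) (p ++ y :: rest) 0 = y.
Proof. induction p; simpl; auto. Qed.

Lemma nth_repeat' (a : R) m k : (k < m)%nat -> nth k (repeat a m) 0 = a.
Proof. revert k; induction m; intros k Hk; [lia|]. destruct k; simpl; auto. apply IHm; lia. Qed.

Lemma nth_app_after (p rest : list R) y k : (length p < k)%nat ->
  nth k (p ++ y :: rest) 0 = nth (k - S (length p)) rest 0.
Proof.
  revert k; induction p; intros k Hk; destruct k; simpl in *; try lia.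
  - f_equal; lia.
  - apply IHp; lia.
Qed.

Definition feas cmin cmax h := feasible_history cmin cmax h.

Lemma feas_nonneg cmin cmax h k : 0 < cmin -> feasible_history cmin cmax h -> 0 <= nth k h 0.
Proof.
  intros Hc H; revert k; induction H; intros k; destruct k; simpl; try lra.
  apply IHForall.
Qed.

Lemma max_range_ge a b f k : (a <= k <= b)%nat -> f k <= max_range a b f.
Proof.
  intros Hk. unfold max_range.
  assert (Hin : In k (seq a (S (b - a)))) by (apply in_seq; lia).
  generalize (f a). induction (seq a (S (b - a))); intros d; [destruct Hin|].
  simpl. destruct Hin as [->|Hin]. apply Rmax_l.
  eapply Rle_trans; [apply (IHl Hin)|apply Rmax_r].
Qed.

Lemma feas_app cmin cm p q : feasible_history cmin cm p -> feasible_history cmin cm q ->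
  feasible_history cmin cm (p ++ q).
Proof. intros; apply Forall_app; auto. Qed.

Lemma feas_rep cmin cm k : cmin <= cm -> feasible_history cmin cm (repeat cm k).
Proof. intros H; unfold feasible_history; apply Forall_forall; intros y Hy.
  apply repeat_spec in Hy; subst; lra. Qed.

Lemma play_cm cmin cm s k h : cmin <= cm -> feasible_history cmin cm h ->
 (forall h', feasible_history cmin cm h' -> (length h <= length h' < length h + k)%nat ->
    s (S (length h')) h' = cm) ->
 play s k h = h ++ repeat cm k.
Proof.
  intros Hc; revert h; induction k; intros h Hh Hs; simpl.
  - rewrite app_nil_r; auto.
  - rewrite (Hs h Hh) by lia.
    rewrite IHk.
    + rewrite <- app_assoc; reflexivity.
    + apply feas_app; auto. constructor; [lra|constructor].
    + intros h' Hh' Hl. apply Hs; auto. rewrite length_app in Hl; simpl in Hl; lia.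
Qed.

Lemma payoff_cmp n l dl cmin cm P g r B p x i :
 0 < cmin -> cmin <= x <= cm -> feasible_history cmin cm p -> length p = (i-1)%nat ->
 (1 <= i <= n)%nat ->
 admissible_cost cmin cm (l i) (dl i) -> dl i cm < r / INR n -> 0 < g -> 0 < B -> B < cm -> 0 < P ->
 payoff n l P g r B (p ++ x :: repeat cm (n-i)) i <= payoff n l P g r B (p ++ cm :: repeat cm (n-i)) i
 /\ (x < cm -> payoff n l P g r B (p ++ x :: repeat cm (n-i)) i < payoff n l P g r B (p ++ cm :: repeat cm (n-i)) i).
Proof.
  intros Hcmin Hx Hp Hlen Hi Hadm Hdl Hg HB HBc HP.
  destruct i as [|i']; [lia|].
  replace (S i' - 1)%nat with i' in Hlen by lia.
  set (rest := repeat cm (n - S i')).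
  set (cx := p ++ x :: rest). set (cc := p ++ cm :: rest).
  assert (Hgi : forall y, get (p ++ y :: rest) (S i') = y).
  { intros y; simpl. rewrite <- Hlen. apply nth_app_at. }
  assert (Hq : get cx i' = get cc i').
  { destruct i'; [reflexivity|]. simpl. apply nth_app_other. lia. }
  assert (Hfc : feasible_history cmin cm cc).
  { apply feas_app; auto. constructor; [lra|]. apply feas_rep; lra. }
  assert (Hq0 : 0 <= get cc i').
  { destruct i'; [simpl; lra|]. simpl. exact (feas_nonneg cmin cm cc i' Hcmin Hfc). }
  assert (Htot : total n cc - total n cx = cm - x).
  { unfold total. change (sumf (get cc) (seq 1 n) - sumf (get cx) (seq 1 n) = cm - x).
    rewrite (sumf_diff _ _ (S i')).
    - unfold cc, cx. rewrite !Hgi. reflexivity.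
    - apply seq_NoDup.
    - apply in_seq; lia.
    - intros j Hj. destruct j; [reflexivity|]. simpl. apply nth_app_other. lia. }
  assert (Hn : get cc n = cm).
  { destruct n as [|n']; [lia|]. simpl. unfold cc.
    destruct (Nat.eq_dec n' (length p)) as [E|E].
    - rewrite E. apply nth_app_at.
    - rewrite nth_app_after by lia. unfold rest. apply nth_repeat'. lia. }
  assert (Hsplit : x < cm \/ x = cm) by lra.
  assert (Hstrict : x < cm -> payoff n l P g r B cx (S i') < payoff n l P g r B cc (S i')).
  { intros Hlt.
    assert (Ht := tangent cmin cm (l (S i')) (dl (S i')) x (r / INR n) Hadm ltac:(lra) Hdl).
    unfold payoff. replace (S i' - 1)%nat with i' by lia.
    unfold cx at 1 3; unfold cc at 1 3. rewrite !Hgi. fold cx cc. rewrite Hq. rewrite Hn.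
    assert (Hm : 0 <= g * (get cc i' / B) * (cm - x)).
    { apply Rmult_le_pos; [|lra]. apply Rmult_le_pos; [lra|]. apply Rdiv_le_0_compat; lra. }
    assert (Ht2 : r / INR n * total n cc - r / INR n * total n cx = r / INR n * (cm - x)).
    { rewrite <- Rmult_minus_distr_l. rewrite Htot. reflexivity. }
    destruct (Rlt_dec cm B); [lra|].
    destruct (Rlt_dec (get cx n) B); nra. }
  split.
  - destruct Hsplit as [Hlt|He]; [left; apply Hstrict; auto|].
    subst x. right. reflexivity.
  - exact Hstrict.
Qed.

Lemma play_split s a b h : play s (a + b) h = play s b (play s a h).
Proof. revert h; induction a; intros h; simpl; auto. Qed.

Section Game.
Variables (n : nat) (cmin cm P g r B : R) (l dl : nat -> R -> R).
Hypotheses (Hn : (1 <= n)%nat) (Hcmin : 0 < cmin) (Hcc : cmin <= cm) (HP : 0 < P)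
  (Hg : 0 < g) (HB : 0 < B) (HBc : B < cm)
  (Hadm : forall i, (1 <= i <= n)%nat -> admissible_cost cmin cm (l i) (dl i))
  (Hdl : forall i, (1 <= i <= n)%nat -> dl i cm < r / INR n).

Lemma s0_SPNE : is_SPNE n cmin cm l P g r B (fun _ _ => cm).
Proof.
  split. { intros i h; lra. }
  intros h Hh Hlen i Hi t Ht.
  set (a := (i - 1 - length h)%nat). set (b := (n - i)%nat).
  unfold outcome.
  replace (n - length h)%nat with (a + (1 + b))%nat by (unfold a, b; lia).
  rewrite !play_split.
  rewrite (play_cm cmin cm (fun _ _ => cm) a h) by auto.
  rewrite (play_cm cmin cm (deviate (fun _ _ => cm) i t) a h); auto.
  2:{ intros h' _ Hl. unfold deviate. replace (Nat.eqb (S (length h')) i) with false; auto.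
      symmetry; apply Nat.eqb_neq. unfold a in Hl; lia. }
  assert (Hfa : feasible_history cmin cm (h ++ repeat cm a)) by (apply feas_app; auto; apply feas_rep; auto).
  assert (Hla : length (h ++ repeat cm a) = (i - 1)%nat) by (rewrite length_app, repeat_length; unfold a; lia).
  simpl play at 1 3.
  unfold deviate at 2. rewrite Hla. replace (Nat.eqb (S (i-1)) i) with true by (symmetry; apply Nat.eqb_eq; lia).
  set (x := t (h ++ repeat cm a)).
  rewrite (play_cm cmin cm (fun _ _ => cm)); auto.
  2:{ apply feas_app; auto. constructor; [lra|constructor]. }
  rewrite (play_cm cmin cm (deviate (fun _ _ => cm) i t)); auto.
  2:{ apply feas_app; auto. constructor; [apply Ht|constructor]. }
  2:{ intros h' _ Hl. unfold deviate. replace (Nat.eqb (S (length h')) i) with false; auto.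
      symmetry; apply Nat.eqb_neq. rewrite length_app, Hla in Hl. simpl in Hl. lia. }
  rewrite <- !(app_assoc (h ++ repeat cm a)). simpl.
  apply (payoff_cmp n l dl cmin cm P g r B (h ++ repeat cm a) x i); auto.
  all: try lia. all: try apply Ht. all: try (apply Hadm; lia). all: try (apply Hdl; lia).
Qed.

Lemma SPNE_unique s : is_SPNE n cmin cm l P g r B s -> outcome n s nil = repeat cm n.
Proof.
  intros [Hfs Hs].
  assert (Q : forall k h, feasible_history cmin cm h -> (length h < n)%nat ->
     (n - length h <= k)%nat -> s (S (length h)) h = cm).
  { induction k; intros h Hh Hl Hk; [lia|].
    set (x := s (S (length h)) h).
    assert (Hx : cmin <= x <= cm) by apply Hfs.
    assert (IH : forall h', feasible_history cmin cm h' ->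
        (length (h ++ x :: nil) <= length h' < length (h ++ x :: nil) + (n - S (length h)))%nat ->
        s (S (length h')) h' = cm).
    { intros h' Hh' Hl'. rewrite length_app in Hl'; simpl in Hl'. apply IHk; auto; lia. }
    specialize (Hs h Hh Hl (S (length h)) ltac:(lia) (fun _ => cm) ltac:(intros; lra)).
    unfold outcome in Hs.
    replace (n - length h)%nat with (S (n - S (length h))) in Hs by lia.
    simpl play in Hs. fold x in Hs. unfold deviate at 2 in Hs. rewrite Nat.eqb_refl in Hs.
    rewrite (play_cm cmin cm s _ (h ++ x :: nil)) in Hs; auto.
    2:{ apply feas_app; auto. constructor; [lra|constructor]. }
    rewrite (play_cm cmin cm (deviate s (S (length h)) (fun _ => cm)) _ (h ++ cm :: nil)) in Hs; auto.
    2:{ apply feas_app; auto. constructor; [lra|constructor]. }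
    2:{ intros h' Hh' Hl'. unfold deviate. replace (Nat.eqb (S (length h')) (S (length h))) with false.
        apply IH; [exact Hh'|]. rewrite length_app in *; simpl in *; lia.
        symmetry; apply Nat.eqb_neq. rewrite length_app in Hl'; simpl in Hl'. lia. }
    rewrite <- !app_assoc in Hs. simpl in Hs.
    destruct (payoff_cmp n l dl cmin cm P g r B h x (S (length h))) as [_ Hst]; auto; try lia; try (apply Hadm; lia); try (apply Hdl; lia).
    destruct (Rlt_dec x cm) as [Hlt|Hge]; [|lra].
    specialize (Hst Hlt). lra. }
  unfold outcome. simpl length. rewrite Nat.sub_0_r.
  rewrite (play_cm cmin cm s n nil); auto.
  - constructor.
  - intros h' Hh' Hl'. apply (Q n); auto; simpl in Hl'; lia.
Qed.
End Game.
Lemma exF A K M g r B : 0 < B ->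
  ex_filterdiff (fun p : R * R * R => A + fst (fst p) * K / snd p + snd (fst p) * M) (locally (g, r, B)).
Proof.
  intros HB.
  set (f1 := fun p : R*R*R => fst (fst p)).
  set (f2 := fun p : R*R*R => snd (fst p)).
  set (f3 := fun p : R*R*R => Rinv (snd p)).
  assert (E1 : ex_filterdiff f1 (locally (g,r,B))).
  { apply ex_filterdiff_linear. apply (is_linear_comp (fun p : R*R*R => fst p) (fun q : R*R => fst q)); apply is_linear_fst. }
  assert (E2 : ex_filterdiff f2 (locally (g,r,B))).
  { apply ex_filterdiff_linear. apply (is_linear_comp (fun p : R*R*R => fst p) (fun q : R*R => snd q)). apply is_linear_fst. apply is_linear_snd. }
  assert (E3 : ex_filterdiff f3 (locally (g,r,B))).
  { apply (ex_filterdiff_comp' (fun p : R*R*R => snd p) Rinv).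
    apply ex_filterdiff_linear, is_linear_snd.
    simpl. apply ex_derive_filterdiff. auto_derive. lra. }
  assert (EK : ex_filterdiff (fun _ : R*R*R => K) (locally (g,r,B))) by (apply ex_filterdiff_const; apply locally_filter).
  assert (EA : @ex_filterdiff R_AbsRing _ (AbsRing_NormedModule R_AbsRing) (fun _ : R*R*R => A) (locally (g,r,B))) by (apply ex_filterdiff_const; apply locally_filter).
  assert (EM : ex_filterdiff (fun _ : R*R*R => M) (locally (g,r,B))) by (apply ex_filterdiff_const; apply locally_filter).
  assert (E4 := ex_filterdiff_mult_fct _ _ _ Rmult_comm EK E3).
  assert (E5 := ex_filterdiff_mult_fct _ _ _ Rmult_comm E1 E4).
  assert (E6 := ex_filterdiff_mult_fct _ _ _ Rmult_comm E2 EM).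
  assert (E7 := ex_filterdiff_plus_fct _ _ EA E5).
  assert (E8 := ex_filterdiff_plus_fct _ _ E7 E6).
  revert E8. apply ex_filterdiff_ext.
  intros p. unfold f1, f2, f3, plus, mult; simpl. unfold Rdiv. ring.
Qed.

Lemma sumf_const k L : sumf (fun _ => k) L = INR (length L) * k.
Proof. induction L; unfold sumf in *; [simpl; ring|].
  replace (INR (length (a :: L))) with (INR (length L) + 1) by (rewrite <- S_INR; reflexivity).
  simpl. rewrite IHL. ring. Qed.

Lemma welfare_rep m l P g r B cm : 0 < B -> B < cm ->
  welfare (S m) l P g r B (repeat cm (S m)) =
  (- l 1%nat cm + sumf (fun j => - l j cm) (seq 2 m)) + g * (INR m * cm * cm) / B
   + r * (INR (S m) * cm).
Proof.
  intros HB HBc.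
  set (c := repeat cm (S m)).
  assert (Hget : forall j, (1 <= j <= S m)%nat -> get c j = cm).
  { intros j Hj. destruct j; [lia|]. unfold get, c. apply nth_repeat'. lia. }
  assert (Htot : total (S m) c = INR (S m) * cm).
  { unfold total. change (sumf (get c) (seq 1 (S m)) = INR (S m) * cm).
    rewrite (sumf_ext _ (fun _ => cm)). rewrite sumf_const, length_seq. reflexivity.
    intros j Hj. apply in_seq in Hj. apply Hget. lia. }
  assert (Hind : (if Rlt_dec (get c (S m)) B then 1 else 0) = 0).
  { rewrite Hget by lia. destruct Rlt_dec; lra. }
  unfold welfare. change (sumf (payoff (S m) l P g r B c) (seq 1 (S m)) =
    (- l 1%nat cm + sumf (fun j => - l j cm) (seq 2 m)) + g * (INR m * cm * cm) / B
   + r * (INR (S m) * cm)).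
  assert (HS : INR (S m) <> 0) by (apply not_0_INR; lia).
  simpl seq. unfold sumf at 1. simpl map. simpl fold_right. fold (sumf (payoff (S m) l P g r B c) (seq 2 m)).
  rewrite (sumf_ext _ (fun j => (- l j cm) + (g * (cm / B) * cm + r * cm))).
  2:{ intros j Hj. apply in_seq in Hj. unfold payoff. rewrite Hind, Htot.
      rewrite !Hget by lia. field; repeat split; try lra; auto. }
  rewrite sumf_add, length_seq.
  unfold payoff. rewrite Hind, Htot. rewrite (Hget 1%nat) by lia. simpl (get c 0).
  replace (get c (1 - 1)) with 0 by reflexivity. rewrite S_INR in *. field; split; lra.
Qed.

Theorem theorem2 (n : nat) (cmin cmax P : R) (l dl : nat -> R -> R)
    (U : R * R * R -> Prop) :
  (2 <= n)%nat -> 0 < cmin -> cmin <= cmax -> 0 < P ->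
  (forall i, (1 <= i <= n)%nat -> admissible_cost cmin cmax (l i) (dl i)) ->
  open U ->
  (forall g r B, U (g, r, B) ->
     0 < g /\ 0 < r /\ 0 < B /\ B < cmax /\
     r > INR n * max_range 1 n (fun i => dl i cmax) /\
     g > max_range 2 n (fun k => (dl k cmax * B - r / INR n) / (cmin / B)) /\
     P > (max_range 1 n (fun i => dl i cmax) + g * (cmax / B) + r / INR n)
           * (cmax - cmin)) ->
  (forall g r B, U (g, r, B) ->
     (exists c, is_SPNE_outcome n cmin cmax l P g r B c) /\
     (forall c1 c2, is_SPNE_outcome n cmin cmax l P g r B c1 ->
                    is_SPNE_outcome n cmin cmax l P g r B c2 -> c1 = c2)) /\
  (forall cstar : R -> R -> R -> list R,
     (forall g r B, U (g, r, B) ->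
        is_SPNE_outcome n cmin cmax l P g r B (cstar g r B)) ->
     let W := fun p : R * R * R =>
       welfare n l P (fst (fst p)) (snd (fst p)) (snd p)
         (cstar (fst (fst p)) (snd (fst p)) (snd p)) in
     forall g r B, U (g, r, B) ->
       ex_filterdiff W (locally (g, r, B)) /\
       (exists d, is_derive (fun x => W (x, r, B)) g d /\ 0 < d) /\
       (exists d, is_derive (fun x => W (g, x, B)) r d /\ 0 < d) /\
       (exists d, is_derive (fun x => W (g, r, x)) B d /\ d < 0)).
Proof.
  intros Hn Hcmin Hcc HP Hadm Hopen HUc.
  assert (Hn0 : (0 < INR n)) by (apply lt_0_INR; lia).
  assert (Hdl : forall g r B, U (g, r, B) -> forall i, (1 <= i <= n)%nat -> dl i cmax < r / INR n).
  { intros g r B HU i Hi. destruct (HUc g r B HU) as (_&_&_&_&Hr&_).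
    assert (Hm := max_range_ge 1 n (fun i => dl i cmax) i Hi). simpl in Hm.
    apply Rmult_lt_reg_l with (INR n); auto.
    replace (INR n * (r / INR n)) with r by (field; lra).
    assert (INR n * dl i cmax <= INR n * max_range 1 n (fun i => dl i cmax))
      by (apply Rmult_le_compat_l; lra). lra. }
  assert (Hout : forall g r B c, U (g, r, B) -> is_SPNE_outcome n cmin cmax l P g r B c ->
     c = repeat cmax n).
  { intros g r B c HU [s [Hs <-]]. destruct (HUc g r B HU) as (Hg&Hr&HB&HBc&_).
    apply (SPNE_unique n cmin cmax P g r B l dl); auto; try lia.
    apply (Hdl g r B HU). }
  split.
  - intros g r B HU. destruct (HUc g r B HU) as (Hg&Hr&HB&HBc&_). split.
    + exists (outcome n (fun _ _ => cmax) nil). exists (fun _ _ => cmax). split; auto.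
      apply (s0_SPNE n cmin cmax P g r B l dl); auto; try lia. apply (Hdl g r B HU).
    + intros c1 c2 H1 H2. rewrite (Hout g r B c1 HU H1), (Hout g r B c2 HU H2). reflexivity.
  - intros cstar Hcs W g r B HU.
    destruct n as [|m]; [lia|].
    set (A := - l 1%nat cmax + sumf (fun j => - l j cmax) (seq 2 m)).
    set (K := INR m * cmax * cmax). set (M := INR (S m) * cmax).
    set (F := fun p : R * R * R => A + fst (fst p) * K / snd p + snd (fst p) * M).
    assert (Heq : forall p, U p -> W p = F p).
    { intros [[g' r'] B'] HU'. unfold W, F; simpl.
      destruct (HUc g' r' B' HU') as (_&_&HB'&HBc'&_).
      rewrite (Hout g' r' B' _ HU' (Hcs g' r' B' HU')).
      rewrite welfare_rep by auto. reflexivity. }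
    destruct (HUc g r B HU) as (Hg&Hr&HB&HBc&_).
    assert (HK : 0 < K).
    { unfold K. assert (0 < INR m) by (apply lt_0_INR; lia).
      assert (0 < cmax) by lra. repeat apply Rmult_lt_0_compat; lra. }
    assert (HM : 0 < M).
    { unfold M. assert (0 < INR (S m)) by (apply lt_0_INR; lia).
      assert (0 < cmax) by lra. apply Rmult_lt_0_compat; lra. }
    assert (Hloc := Hopen _ HU).
    assert (Hloc1 : forall (P0 : R -> Prop) (f : R -> R*R*R), locally g (fun x => U (x, r, B)) -> True) by auto.
    assert (L1 : locally g (fun x => U (x, r, B))).
    { destruct Hloc as [eps H]. exists eps. intros y Hy. apply H. split; [split|]; simpl; auto; apply ball_center. }
    assert (L2 : locally r (fun x => U (g, x, B))).
    { destruct Hloc as [eps H]. exists eps. intros y Hy. apply H. split; [split|]; simpl; auto; apply ball_center. }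
    assert (L3 : locally B (fun x => U (g, r, x))).
    { destruct Hloc as [eps H]. exists eps. intros y Hy. apply H. split; [split|]; simpl; auto; apply ball_center. }
    split; [|split; [|split]].
    + apply (ex_filterdiff_ext_locally F).
      { destruct Hloc as [eps H]. exists eps. intros y Hy. symmetry. apply Heq, H, Hy. }
      unfold F; apply exF; lra.
    + exists (K / B). split; [|apply Rdiv_lt_0_compat; lra].
      apply (is_derive_ext_loc (fun x => F (x, r, B))).
      { apply (filter_imp _ _ (fun x Hx => eq_sym (Heq _ Hx)) L1). }
      unfold F; simpl. auto_derive; [lra|]. field. lra.
    + exists M. split; auto.
      apply (is_derive_ext_loc (fun x => F (g, x, B))).
      { apply (filter_imp _ _ (fun x Hx => eq_sym (Heq _ Hx)) L2). }
      unfold F; simpl. auto_derive; [lra|]. ring.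
    + exists (- (g * K / (B * B))). split.
      2:{ assert (0 < g * K / (B*B)). { apply Rdiv_lt_0_compat. apply Rmult_lt_0_compat; lra. apply Rmult_lt_0_compat; lra. } lra. }
      apply (is_derive_ext_loc (fun x => F (g, r, x))).
      { apply (filter_imp _ _ (fun x Hx => eq_sym (Heq _ Hx)) L3). }
      unfold F; simpl. auto_derive; [lra|]. field. lra.
Qed.
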